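(* Let $X_1,\ldots,X_n$ be independent and uniformly distributed on $\{1,\ldots,n\}$ under $\mathbb{P}$. For a prime $p$ let $Y_p:=\#\{1\le i\le n:p\mid X_i\}$ and $S(k_1,k_2):=\{p\in\mathcal{P}:k_1<p\le k_2\}$. Then for every $\epsilon>0$, for all sufficiently large $k_1\le k_2$ and all sufficiently large $n\ge k_2$, \[ \frac1n\log\mathbb{P}\left(\sum_{p\in S(k_1,k_2)}Y_{p}^{2}>\epsilon n^{2}\right)\leq4\log\log k_{2}+4-\frac{\log(k_{1})}{8}\epsilon. \]
   Context: $\mathcal{P}$ denotes the set of primes. (The paper's displayed statement omits the factor $\frac1n\log$, which its proof establishes.) *)

(* Defs.v *)
From mathcomp Require Import all_boot.
From Stdlib Require Import Reals.

Set Implicit Arguments.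
Unset Strict Implicit.
Unset Printing Implicit Defensive.

(* An outcome (X_1,...,X_n) is f : {ffun 'I_n -> 'I_n}, with X_{i+1} = (f i).+1 in {1..n}.
   The uniform product measure gives each of the n^n outcomes mass 1/n^n. *)
Definition outcome (n : nat) := {ffun 'I_n -> 'I_n}.

Definition Y (n p : nat) (f : outcome n) : nat :=
  #|[pred i : 'I_n | p %| (f i).+1]|.

Definition SY (n k1 k2 : nat) (f : outcome n) : nat :=
  \sum_(k1.+1 <= p < k2.+1 | prime p) (Y p f) ^ 2.

Definition big_event (n k1 k2 : nat) (eps : R) : pred (outcome n) :=
  [pred f | if Rlt_dec (eps * INR n * INR n)%R (INR (SY k1 k2 f)) then true else false].

Definition Prob (n : nat) (E : pred (outcome n)) : R :=
  (INR #|E| / INR (n ^ n))%R.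

(* Main.v *)
Require Import Defs.
From mathcomp Require Import all_boot.
From Stdlib Require Import Reals Lra.
From mathcomp Require all_order all_algebra Rstruct ring lra zify.
Module Aux.
Import ssreflect ssrnat div prime bigop.
Import all_order all_algebra Rstruct ring lra zify.
Import Order.TTheory GRing.Theory Num.Theory.
Set Implicit Arguments. Unset Strict Implicit. Unset Printing Implicit Defensive.
Lemma powE m n : Nat.pow m n = expn m n.
Proof. elim: n => [|n IH] //=. by rewrite expnS IH. Qed.

Lemma prime_ndvd_fact p m : prime p -> m < p -> ~~ (p %| m`!).
Proof.
move=> pp; elim: m => [|m IH] lt.
  by rewrite fact0 dvdn1; apply/eqP=> e; rewrite e in pp.
rewrite factS Euclid_dvdM // negb_or IH ?andbT; last by apply: ltnW.
by apply/negP=> /dvdn_leq -/(_ isT); rewrite leqNgt lt.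
Qed.

Lemma prod_primes_dvd (s : seq nat) (P : pred nat) m :
  uniq s -> (forall p, p \in s -> P p -> prime p && (p %| m)) ->
  \prod_(p <- s | P p) p %| m.
Proof.
elim: s => [|a s IH] /=; first by rewrite big_nil dvd1n.
move=> /andP[an us] H; rewrite big_cons.
have IH' : \prod_(p <- s | P p) p %| m.
  by apply: IH => // p ps; apply: H; rewrite inE ps orbT.
case Pa: (P a) => //.
have /andP[pa am] := H a (mem_head _ _) Pa.
rewrite Gauss_dvd ?am ?IH' //.
rewrite big_seq_cond; apply: (big_ind (fun x => coprime a x)).
- exact: coprimen1.
- by move=> x y; rewrite coprimeMr => -> ->.
move=> p /andP[ps Pp].
have /andP[pp _] : prime p && (p %| m) by apply: H => //; rewrite inE ps orbT.
rewrite prime_coprime // dvdn_prime2 //; apply/eqP => e.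
by rewrite e ps in an.
Qed.

Lemma count_mult n d : 0 < d -> \sum_(x < n) (d %| x.+1 : nat) = n %/ d.
Proof.
move=> d0; elim: n => [|n IH]; first by rewrite big_ord0 div0n.
by rewrite big_ord_recr /= IH divnS // addnC.
Qed.

Lemma bin_le4 m : 'C(m.*2, m) <= 4 ^ m.
Proof.
have : 2 ^ m.*2 = \sum_(i < m.*2.+1) 'C(m.*2, i).
  rewrite -{1}[2]/(1 + 1) expnDn; apply: eq_bigr => i _.
  by rewrite !exp1n !muln1.
have -> : 4 ^ m = 2 ^ m.*2 by rewrite -mul2n expnM.
move=> ->.
have hi : m < m.*2.+1 by rewrite ltnS -addnn leq_addr.
rewrite (bigD1 (Ordinal hi)) //=; exact: leq_addr.
Qed.

Lemma cheb m : \prod_(m.+1 <= p < m.*2.+1 | prime p) p <= 4 ^ m.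
Proof.
apply: leq_trans (bin_le4 m).
have Cpos : 0 < 'C(m.*2, m) by rewrite bin_gt0 -addnn leq_addr.
apply: dvdn_leq Cpos _.
apply: prod_primes_dvd; first exact: iota_uniq.
move=> p; rewrite mem_index_iota => /andP[lo hi] pp; rewrite pp /=.
have hm : m <= m.*2 by rewrite -addnn leq_addr.
have := bin_fact hm; rewrite -addnn addnK => E.
have : p %| (m + m)`!.
  apply: dvdn_fact; rewrite -addnn in hi; apply/andP; split; lia.
rewrite -E Euclid_dvdM // Euclid_dvdM // (negbTE (prime_ndvd_fact pp lo)) /= orbF.
done.
Qed.

Lemma prod_const_seq (r : seq nat) (P : pred nat) c :
  \prod_(p <- r | P p) c = c ^ count P r.
Proof.
elim: r => [|a r IH]; first by rewrite big_nil.
by rewrite big_cons /= IH; case: (P a) => //=; rewrite expnS.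
Qed.

Lemma cheb_count t : 0 < t ->
  t * count prime (index_iota (2 ^ t).+1 ((2 ^ t).*2.+1)) <= (2 ^ t).*2.
Proof.
move=> t0.
set c := count _ _.
have h1 : (2 ^ t) ^ c <= 4 ^ (2 ^ t).
  apply: leq_trans (cheb (2 ^ t)).
  rewrite -prod_const_seq big_seq_cond [X in _ <= X]big_seq_cond.
  apply: leq_prod => p /andP[]; rewrite mem_index_iota => /andP[lo _] _.
  exact: ltnW.
rewrite -expnM -[4]/(2 ^ 2) -expnM mul2n in h1.
by rewrite -(leq_exp2l _ _ (isT : 1 < 2)).
Qed.
Local Open Scope ring_scope.
Bind Scope ring_scope with R.

Lemma ln_lt_lt (x y : R) : 0 < x -> x < y -> ln x < ln y.
Proof. by move=> /RltP x0 /RltP xy; apply/RltP; apply: ln_increasing. Qed.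

Lemma ln_le_le (x y : R) : 0 < x -> x <= y -> ln x <= ln y.
Proof.
move=> x0; rewrite le_eqVlt => /orP[/eqP->//|xy].
exact/ltW/ln_lt_lt.
Qed.

Lemma ln_le_sub1 (y : R) : 0 < y -> ln y <= y - 1.
Proof.
move=> y0; rewrite leNgt; apply/negP => /RltP h.
have := exp_increasing _ _ h; rewrite exp_ln; last by apply/RltP.
have /RleP := exp_ineq1_le (y - 1); rewrite R1E => h1 /RltP h2.
rewrite ?RminusE ?RplusE in h1 h2; lra.
Qed.

Lemma ln1' : ln 1 = 0. Proof. exact: ln_1. Qed.

Lemma ln_ge0 (x : R) : 1 <= x -> 0 <= ln x.
Proof. by move=> x1; rewrite -ln1'; apply: ln_le_le. Qed.

Lemma ln2_lt1 : ln 2 < 1.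
Proof.
have /RltP h := exp_ineq1 1 R1_neq_R0.
rewrite -[X in _ < X](ln_exp 1); apply: ln_lt_lt => //.
Qed.

Lemma ln2_gt : 2^-1 < ln 2.
Proof. by have /RltP := ln_lt_2; rewrite RinvE IZRposE INRE. Qed.

Definition T (x : nat) : R := \sum_(0 <= p < x.+1 | prime p) (p%:R)^-1.
Definition D (t : nat) : R :=
  \sum_((2 ^ t).+1 <= p < (2 ^ t).*2.+1 | prime p) (p%:R)^-1.

Lemma T_split t : T (2 ^ t.+1) = T (2 ^ t) + D t.
Proof.
rewrite /T /D expnS mul2n (@big_cat_nat _ _ _ (2 ^ t).+1) //.
by rewrite ltnS -addnn leq_addr.
Qed.

Lemma T_mono x y : (x <= y)%N -> T x <= T y.
Proof.
move=> xy; rewrite /T [X in _ <= X](@big_cat_nat _ _ _ x.+1) //=.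
rewrite lerDl; apply: sumr_ge0 => i _; rewrite invr_ge0; exact: ler0n.
Qed.

Lemma sum_const_seq (r : seq nat) (P : pred nat) (c : R) :
  \sum_(p <- r | P p) c = (count P r)%:R * c.
Proof.
elim: r => [|a r IH]; first by rewrite big_nil mul0r.
rewrite big_cons /= IH; case: (P a) => /=; last by rewrite add0n.
by rewrite natrD mulrDl mul1r.
Qed.

Lemma D_le t : (0 < t)%N -> D t <= 2 / t%:R.
Proof.
move=> t0; set X : R := (2 ^ t)%:R.
have X0 : 0 < X by rewrite ltr0n expn_gt0.
have t0' : 0 < (t%:R : R) by rewrite ltr0n.
apply: (@le_trans _ _ (\sum_((2 ^ t).+1 <= p < (2 ^ t).*2.+1 | prime p) X^-1)).
  rewrite /D big_seq_cond [X in _ <= X]big_seq_cond; apply: ler_sum => p /andP[].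
  rewrite mem_index_iota => /andP[lo _] _.
  rewrite lef_pV2 ?posrE ?ltr0n ?expn_gt0 //; last by apply: leq_trans lo.
  by rewrite ler_nat ltnW.
rewrite sum_const_seq.
have := cheb_count t0; rewrite -(ler_nat R) natrM => h.
rewrite ler_pdivlMr // mulrAC ler_pdivrMr // mulrC.
apply: le_trans h _; rewrite -mul2n natrM /X; lra.
Qed.

Lemma ln_step t : (0 < t)%N -> (t.+1%:R)^-1 <= ln (t.+1%:R : R) - ln (t%:R).
Proof.
move=> t0.
have t0' : 0 < (t%:R : R) by rewrite ltr0n.
have t1' : 0 < (t.+1%:R : R) by rewrite ltr0n.
have h := ln_le_sub1 (divr_gt0 t0' t1').
have e1 : ln (t%:R / t.+1%:R) = ln (t%:R) - ln (t.+1%:R).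
  rewrite -RdivE /Rdiv ln_mult ?ln_Rinv //; try by apply/RltP.
  by apply/RltP; rewrite RinvE invr_gt0.
have e2 : (t%:R / t.+1%:R - 1 : R) = - (t.+1%:R)^-1.
  rewrite -[t.+1]addn1 natrD; field; apply: lt0r_neq0; lra.
rewrite e1 e2 in h.
move: h; set a := ln (t.+1%:R : R); set b := ln (t%:R : R); set c := ((t.+1%:R : R)^-1).
move=> h; lra.
Qed.

Lemma T_pow t : T (2 ^ t.+1) + 2 / t.+1%:R <= 5/2 + 2 * ln (t.+1%:R).
Proof.
elim: t => [|t IH].
  rewrite /T expn1 big_mkcond /= !big_nat_recr //= big_geq //=.
  rewrite ln1' mulr0; lra.
rewrite T_split.
have Dt := D_le (ltn0Sn t).
have st := ln_step (ltn0Sn t).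
move: IH Dt st.
set a := T _; set b := D _; set c := ln (t.+1%:R : R); set d := ln (t.+2%:R : R).
set e := ((t.+1%:R : R)^-1); set f := ((t.+2%:R : R)^-1).
move=> IH Dt st; lra.
Qed.
Lemma ln_mul (x y : R) : 0 < x -> 0 < y -> ln (x * y) = ln x + ln y.
Proof. by move=> /RltP x0 /RltP y0; exact: ln_mult. Qed.

Lemma ln_natX (a n : nat) : (0 < a)%N -> ln ((a ^ n)%:R : R) = n%:R * ln (a%:R).
Proof.
move=> a0; rewrite natrX -RpowE ln_pow ?INRE //.
by apply/RltP; rewrite ltr0n.
Qed.

Lemma mertens x : (2 <= x)%N -> T x <= 9 + 2 * ln (ln x%:R).
Proof.
move=> x2.
have x0 : (0 < x)%N by apply: leq_trans x2.
have t0 : (0 < trunc_log 2 x)%N by rewrite trunc_log_gt0.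
have hx : (x < 2 ^ (trunc_log 2 x).+1)%N := trunc_log_ltn x (isT : (1 < 2)%N).
have hx2 : (2 ^ trunc_log 2 x <= x)%N := trunc_logP (isT : (1 < 2)%N) x0.
move: t0 hx hx2; case: (trunc_log 2 x) => [//|t] _ hx hx2.
have h1 : T x <= T (2 ^ t.+2) := T_mono (ltnW hx).
have h2 := T_pow t.+1.
have l2 := ln2_gt.
have l21 := ln2_lt1.
have hlx : ln (2 ^ t.+1)%:R <= ln (x%:R : R).
  apply: ln_le_le; first by rewrite ltr0n expn_gt0.
  by rewrite ler_nat.
rewrite ln_natX // in hlx.
have lx0 : 0 < ln (x%:R : R).
  have : ln 2 <= ln (x%:R : R).
    apply: ln_le_le => //; have := x2; rewrite -(ler_nat R) => h; exact: h.
  move: l2; set L := ln (x%:R : R); set l := ln 2; move=> *; lra.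
have ht : (t.+2%:R : R) <= 4 * ln (x%:R).
  rewrite -[t.+2]addn1 natrD.
  move: hlx l2; set L := ln (x%:R : R); set l := ln 2; set u := (t.+1%:R : R).
  move=> hlx l2.
  have u0 : 0 <= u by rewrite /u ler0n.
  have u1 : 1 <= u by rewrite /u ler1n.
  have X : u * 2^-1 <= u * l by rewrite ler_wpM2l // ltW.
  have h3 := le_trans X hlx.
  have t1 : u + 1 <= 2 * u by lra.
  apply: (le_trans t1); lra.
have hl : ln (t.+2%:R : R) <= ln 4 + ln (ln x%:R).
  rewrite -ln_mul //.
  apply: (@ln_le_le (t.+2%:R) (4 * ln x%:R)) => //; by rewrite ltr0n.
have l4 : ln 4 <= 4 - 1 by apply: ln_le_sub1.
have ge : 0 <= 2 / (t.+2%:R : R) by rewrite divr_ge0 ?ler0n.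
move: h1 h2 hl l4 ge.
set a := T _; set b := T _; set c := ln (t.+2%:R : R); set d := ln (ln (x%:R : R)).
set e := 2 / (t.+2%:R : R); set f := ln 4; set g := ln 2.
move=> *; lra.
Qed.
Section Gen.
Variables (I : finType) (pv : I -> nat).
Hypothesis pv_inj : injective pv.
Hypothesis pv_prime : forall q, prime (pv q).

Lemma pv_gt0 q : (0 < pv q)%N.
Proof. exact: prime_gt0. Qed.

Lemma L1 (J : {set I}) m : (forall q, q \in J -> (pv q %| m)%N) -> (\prod_(q in J) pv q %| m)%N.
Proof.
move=> H.
have -> : (\prod_(q in J) pv q = \prod_(p <- map pv (enum J)) p)%N by rewrite big_map big_enum.
apply: (@prod_primes_dvd _ predT).
  by rewrite (map_inj_uniq pv_inj) enum_uniq.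
move=> p /mapP[q qJ ->] _; rewrite pv_prime H //.
by rewrite -mem_enum.
Qed.

Lemma count_bound (J : {set I}) n :
  \sum_(x < n) \prod_(q in J) ((pv q %| x.+1)%N%:R : R)
     <= n%:R / (\prod_(q in J) pv q)%N%:R.
Proof.
set d := (\prod_(q in J) pv q)%N.
have d0 : (0 < d)%N by apply: prodn_gt0 => q; exact: pv_gt0.
apply: (@le_trans _ _ (\sum_(x < n) (((d %| x.+1)%N : nat)%:R : R))).
  apply: ler_sum => x _.
  case h : (d %| x.+1)%N.
    apply: prodr_ile1 => q _; rewrite ler0n /=.
    by rewrite -[1]/(1%:R) ler_nat leq_b1.
  have : ~~ [forall q in J, (pv q %| x.+1)%N].
    apply/negP => /forallP H; move/negP: h; apply; apply: L1 => q qJ.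
    by have := H q; rewrite qJ.
  rewrite negb_forall => /existsP[q]; rewrite negb_imply => /andP[qJ nq].
  by rewrite (bigD1 q) //= (negbTE nq) mul0r.
rewrite -natr_sum count_mult // ler_pdivlMr ?ltr0n // -natrM ler_nat.
exact: leq_trunc_div.
Qed.

Lemma L3 (c : I -> R) n : (forall q, 1 <= c q) ->
  \sum_(x < n) \prod_q (if (pv q %| x.+1)%N then c q else 1)
    <= n%:R * \prod_q (1 + (c q - 1) / (pv q)%:R).
Proof.
move=> c1.
have e1 : forall x : 'I_n, \prod_q (if (pv q %| x.+1)%N then c q else 1)
    = \sum_(J : {set I}) \prod_(q in J) ((c q - 1) * ((pv q %| x.+1)%N%:R)).
  move=> x.
  rewrite (eq_bigr (fun q => (c q - 1) * ((pv q %| x.+1)%N%:R) + 1)); last first.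
    by move=> q _; case: (pv q %| x.+1)%N; rewrite /= ?mulr1 ?mulr0 ?add0r ?subrK.
  rewrite bigA_distr; apply: eq_bigr => J _; by rewrite [RHS]big_mkcond.
rewrite (eq_bigr _ (fun x _ => e1 x)) exchange_big /=.
rewrite (eq_bigr (fun J : {set I} => \prod_(q in J) (c q - 1) *
     \sum_(x < n) \prod_(q in J) ((pv q %| x.+1)%N%:R : R))); last first.
  move=> J _; rewrite mulr_sumr; apply: eq_bigr => x _; exact: big_split.
apply: (@le_trans _ _ (\sum_(J : {set I}) \prod_(q in J) (c q - 1) *
     (n%:R / (\prod_(q in J) pv q)%N%:R))).
  apply: ler_sum => J _; apply: ler_wpM2l; last exact: count_bound.
  by apply: prodr_ge0 => q _; rewrite subr_ge0.
rewrite (eq_bigr (fun q => (c q - 1) / (pv q)%:R + 1)); last by move=> q _; rewrite addrC.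
rewrite bigA_distr mulr_sumr; apply: ler_sum => J _.
rewrite -big_mkcond prodf_div natr_prod.
by rewrite mulrCA.
Qed.
End Gen.
Lemma prod_ord_const n (X : R) : \prod_(i < n) X = X ^+ n.
Proof.
elim: n => [|n IH]; first by rewrite big_ord0 expr0.
by rewrite big_ord_recr /= IH exprSr.
Qed.

Section Gen2.
Variables (I : finType) (pv : I -> nat).
Hypothesis pv_inj : injective pv.
Hypothesis pv_prime : forall q, prime (pv q).

Definition Yc n q (f : {ffun 'I_n -> 'I_n}) := #|[pred i : 'I_n | (pv q %| (f i).+1)%N]|.

Lemma L4 (c : I -> R) n : (forall q, 1 <= c q) ->
  \sum_(f : {ffun 'I_n -> 'I_n}) \prod_q c q ^+ Yc q f
   <= n%:R ^+ n * \prod_q (1 + (c q - 1) / (pv q)%:R) ^+ n.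
Proof.
move=> c1.
set g := fun x : 'I_n => \prod_q (if (pv q %| x.+1)%N then c q else 1).
have e : forall f : {ffun 'I_n -> 'I_n}, \prod_q c q ^+ Yc q f = \prod_(i < n) g (f i).
  move=> f; rewrite /g exchange_big /=; apply: eq_bigr => q _.
  rewrite /Yc -prodr_const big_mkcond /=; apply: eq_bigr => i _.
  by rewrite inE.
rewrite (eq_bigr _ (fun f _ => e f)).
rewrite -(bigA_distr_bigA (fun (i : 'I_n) (x : 'I_n) => g x)) /=.
rewrite prod_ord_const prodrXl -exprMn.
have g0 : 0 <= \sum_(x < n) g x.
  apply: sumr_ge0 => x _; apply: prodr_ge0 => q _.
  case: (_ %| _)%N => //; exact: le_trans (c1 q).
apply: lerXn2r; rewrite ?nnegrE //; last exact: L3.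
apply: mulr_ge0; first exact: ler0n.
apply: prodr_ge0 => q _; apply: addr_ge0 => //.
by apply: divr_ge0; rewrite ?subr_ge0 ?ler0n.
Qed.

Lemma exp_mln (a : R) m : 0 < a -> exp (m%:R * ln a) = a ^+ m.
Proof.
move=> a0; have ap : 0 < a ^+ m by rewrite exprn_gt0.
rewrite -[RHS]exp_ln; last by apply/RltP.
congr exp; rewrite -RpowE ln_pow ?INRE //; by apply/RltP.
Qed.

Lemma exp_le (x y : R) : x <= y -> exp x <= exp y.
Proof.
rewrite le_eqVlt => /orP[/eqP->//|/RltP h].
by apply/ltW/RltP; apply: exp_increasing.
Qed.

Lemma exp_gt0 (x : R) : 0 < exp x.
Proof. by apply/RltP; apply: exp_pos. Qed.

Lemma exp_add (x y : R) : exp (x + y) = exp x * exp y.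
Proof. exact: exp_plus. Qed.

Lemma phi_bound (lam p : R) (m n : nat) : (0 < n)%N -> (m <= n)%N -> 0 <= lam ->
  1 < p -> 4 * lam <= ln p ->
  exp (lam * (m%:R ^+ 2) / n%:R) <= 2 ^+ m + (8^-1) ^+ n * p ^+ m.
Proof.
move=> n0 mn l0 p1 lp.
set M : R := m%:R; set N : R := n%:R.
have N0 : 0 < N by rewrite ltr0n.
have M0 : 0 <= M by rewrite ler0n.
have MN : M <= N by rewrite ler_nat.
set A := lam * M.
have A0 : 0 <= A by apply: mulr_ge0.
have eL : lam * M ^+ 2 / N = M * (A / N) by rewrite /A expr2; field; apply: lt0r_neq0.
have eR : lam * M ^+ 2 / N = A * (M / N) by rewrite /A expr2; field; apply: lt0r_neq0.
have p0 : 0 < p by apply: lt_trans p1.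
have l2pos : 0 < ln 2 by apply: lt_trans ln2_gt; rewrite invr_gt0.
have pm0 : 0 <= (8^-1) ^+ n * p ^+ m by apply: mulr_ge0; rewrite exprn_ge0 // ?invr_ge0 // ltW.
case: (leP A (N * ln 2)) => hA.
  apply: (@le_trans _ _ (2 ^+ m)); last by rewrite lerDl.
  rewrite -(@exp_mln 2 m) // eL; apply: exp_le.
  apply: ler_wpM2l => //.
  by rewrite ler_pdivrMr // mulrC.
apply: (@le_trans _ _ (exp (M * ln p + N * ln (8^-1)))); last first.
  rewrite exp_add exp_mln // exp_mln ?invr_gt0 // [X in X <= _]mulrC.
  by apply: ler_wpDl; rewrite ?exprn_ge0.
rewrite eR; apply: exp_le.
have h1 : A * (M / N) <= A by apply: ler_piMr => //; rewrite ler_pdivrMr // mul1r.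
apply: (le_trans h1).
have h8 : ln (8^-1 : R) = - (3%:R * ln 2).
  rewrite -RinvE ln_Rinv; last by apply/RltP.
  by rewrite -ln_natX // ?natrX.
have h4 : 4 * A <= M * ln p.
  have -> : 4 * A = M * (4 * lam) by rewrite /A; ring.
  by rewrite ler_wpM2l.
rewrite h8.
move: hA h4; set LP := M * ln p; set N2 := N * ln 2.
have -> : N * - (3%:R * ln 2) = - (3%:R * N2) by rewrite /N2; ring.
move=> *; lra.
Qed.
Lemma L5 (lam : R) n : (0 < n)%N -> 0 <= lam -> (forall q, 4 * lam <= ln (pv q)%:R) ->
  \sum_(f : {ffun 'I_n -> 'I_n}) \prod_q exp (lam * ((Yc q f)%:R ^+ 2) / n%:R)
   <= n%:R ^+ n * \prod_q ((4^-1) ^+ n + (1 + (pv q)%:R^-1) ^+ n).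
Proof.
move=> n0 l0 hl.
have p1 : forall q, 1 < ((pv q)%:R : R) by move=> q; rewrite ltr1n prime_gt1.
set u := fun q (f : {ffun 'I_n -> 'I_n}) => (2:R) ^+ Yc q f.
set v := fun q (f : {ffun 'I_n -> 'I_n}) => (8^-1 : R) ^+ n * (pv q)%:R ^+ Yc q f.
apply: (@le_trans _ _ (\sum_f \prod_q (v q f + u q f))).
  apply: ler_sum => f _; apply: ler_prod => q _.
  rewrite ltW ?exp_gt0 //= addrC; apply: phi_bound => //.
  by rewrite /Yc; apply: leq_trans (max_card _) _; rewrite card_ord.
set w := fun (J : {set I}) q => if q \in J then (8^-1 : R) ^+ n else 1.
set cc := fun (J : {set I}) q => if q \in J then ((pv q)%:R : R) else 2.
have e : forall f, \prod_q (v q f + u q f) =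
    \sum_(J : {set I}) (\prod_q w J q * \prod_q cc J q ^+ Yc q f).
  move=> f; rewrite bigA_distr; apply: eq_bigr => J _; rewrite -big_split; apply: eq_bigr => q _.
  by rewrite /w /cc /u /v; case: (q \in J) => /=; rewrite ?mul1r.
rewrite (eq_bigr _ (fun f _ => e f)) exchange_big /=.
apply: (@le_trans _ _ (\sum_(J : {set I}) (\prod_q w J q *
     (n%:R ^+ n * \prod_q (1 + (cc J q - 1) / (pv q)%:R) ^+ n)))).
  apply: ler_sum => J _; rewrite -mulr_sumr; apply: ler_wpM2l.
    by apply: prodr_ge0 => q _; rewrite /w; case: (_ \in _); rewrite ?exprn_ge0 ?invr_ge0.
  apply: L4 => q; rewrite /cc; case: (_ \in _); [exact: ltW (p1 q) | lra].
rewrite bigA_distr mulr_sumr; apply: ler_sum => J _.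
rewrite mulrCA; apply: ler_wpM2l; first by rewrite exprn_ge0 ?ler0n.
rewrite -big_split; apply: ler_prod => q _ /=.
rewrite /w /cc; case: (q \in J) => /=.
  have pp := p1 q.
  set P := ((pv q)%:R : R).
  have P0 : 0 < P by apply: lt_trans pp.
  have X0 : 0 <= (P - 1) / P by apply: divr_ge0; lra.
  have X1 : (P - 1) / P <= 1 by rewrite ler_pdivrMr // mul1r; lra.
  rewrite -exprMn; apply/andP; split.
    apply: exprn_ge0; apply: mulr_ge0; lra.
  apply: lerXn2r; rewrite ?nnegrE; lra.
rewrite mul1r (_ : (2:R) - 1 = 1); last lra.
rewrite div1r lexx andbT; apply: exprn_ge0; apply: addr_ge0 => //.
by rewrite invr_ge0 ler0n.
Qed.
End Gen2.
Lemma exp_sum (I : Type) (r : seq I) (P : pred I) (F : I -> R) :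
  exp (\sum_(i <- r | P i) F i) = \prod_(i <- r | P i) exp (F i).
Proof.
apply: (big_morph exp exp_add); exact: exp_0.
Qed.

Lemma exp_ge1 (x : R) : 0 <= x -> 1 <= exp x.
Proof. move=> x0; have /RleP := exp_ineq1_le x; rewrite RplusE R1E => h; lra. Qed.

Lemma one_add_le_exp (x : R) : 1 + x <= exp x.
Proof. by have /RleP := exp_ineq1_le x. Qed.

Lemma ln_ge1_3 (k : nat) : (3 <= k)%N -> 1 <= ln (k%:R : R).
Proof.
move=> k3.
have /RleP e3 := exp_le_3.
rewrite -[X in X <= _](ln_exp 1); apply: ln_le_le; first exact: exp_gt0.
apply: (le_trans e3); rewrite IZRposE INRE ler_nat; exact: k3.
Qed.

Definition Apred k1 k2 : {pred 'I_k2.+1} := [pred p : 'I_k2.+1 | (k1 < p)%N && prime p].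
Section Main.
Variables (k1 k2 : nat).
Let Sq := {x : 'I_k2.+1 | x \in (@Apred k1 k2)}.
Let pv := fun q : Sq => nat_of_ord (val q).
Lemma pv_inj : injective pv.
Proof. by move=> a b h; apply: val_inj; apply: ord_inj. Qed.
Lemma pv_prime (q : Sq) : prime (pv q).
Proof. by have := valP q; rewrite inE => /andP[]. Qed.
Lemma pv_gt (q : Sq) : (k1 < pv q)%N.
Proof. by have := valP q; rewrite inE => /andP[]. Qed.

Lemma SYe n (f : {ffun 'I_n -> 'I_n}) :
  (SY k1 k2 f)%:R = \sum_(q : Sq) ((Yc pv q f)%:R ^+ 2) :> R.
Proof.
rewrite /SY big_geq_mkord natr_sum.
rewrite (eq_bigl (fun p => p \in (@Apred k1 k2))); last by move=> p; rewrite inE andbC.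
rewrite big_sub; apply: eq_bigr => q _.
by rewrite powE natrX.
Qed.

Lemma M_le : \sum_(q : Sq) ((pv q)%:R : R)^-1 <= T k2.
Proof.
rewrite /T big_mkord -(big_sub ((@Apred k1 k2)) (fun p : 'I_k2.+1 => (p%:R : R)^-1)).
rewrite big_mkcond [X in _ <= X]big_mkcond; apply: ler_sum => p _.
rewrite inE; case: (k1 < p)%N; case: (prime p) => //=.
by rewrite invr_ge0 ler0n.
Qed.

Lemma card_Sq : (#|{: Sq}| <= k2.+1)%N.
Proof. by rewrite card_sig; apply: leq_trans (max_card _) _; rewrite card_ord. Qed.

Lemma main_bound eps n : 0 < eps -> (3 <= k1)%N -> (k1 <= k2)%N -> (k2 <= n)%N ->
  56 <= ln k1%:R * eps ->
  #|(@big_event n k1 k2 eps)|%:R / (n ^ n)%N%:R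
    <= exp (n%:R * (4 * ln (ln k2%:R) + 4 - ln k1%:R / 8 * eps)).
Proof.
move=> e0 k13 k12 k2n hK.
have n0 : (0 < n)%N by lia.
have k23 : (3 <= k2)%N by lia.
have k22 : (2 <= k2)%N by lia.
move: hK; set L1 := ln (k1%:R : R); set L2 := ln (ln (k2%:R : R)) => hK.
have L1g : 1 <= L1 := ln_ge1_3 k13.
have L2g : 0 <= L2 := ln_ge0 (ln_ge1_3 k23).
set lam := L1 / 4.
have lam0 : 0 <= lam by rewrite /lam divr_ge0 //; lra.
have hl : forall q, 4 * lam <= ln (pv q)%:R.
  move=> q; rewrite /lam (_ : 4 * (L1 / 4) = L1); last by field.
  apply: ln_le_le; first by rewrite ltr0n; lia.
  by rewrite ler_nat ltnW // pv_gt.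
set Sf := \sum_(f : {ffun 'I_n -> 'I_n}) \prod_(q : Sq) exp (lam * ((Yc pv q f)%:R ^+ 2) / n%:R).
have Hb : Sf <= n%:R ^+ n * \prod_(q : Sq) ((4^-1) ^+ n + (1 + (pv q)%:R^-1) ^+ n).
  exact: (L5 pv_inj pv_prime n0 lam0 hl).
have Hc : \prod_(q : Sq) ((4^-1) ^+ n + (1 + (pv q)%:R^-1) ^+ n)
     <= 2 ^+ #|{: Sq}| * exp (n%:R * \sum_(q : Sq) (pv q)%:R^-1).
  rewrite mulr_sumr exp_sum -prodr_const -big_split /=; apply: ler_prod => q _.
  have x0 : 0 <= ((pv q)%:R : R)^-1 by rewrite invr_ge0 ler0n.
  have b1 : (1:R) <= (1 + (pv q)%:R^-1) ^+ n by apply: exprn_ege1; lra.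
  have a1 : (4^-1 : R) ^+ n <= 1 by apply: (@exprn_ile1 R n); lra.
  have a0 : 0 <= (4^-1 : R) ^+ n by apply: exprn_ge0; lra.
  have be : (1 + (pv q)%:R^-1) ^+ n <= exp (n%:R * (pv q)%:R^-1).
    rewrite mulr_natl -expRX; apply: lerXn2r; rewrite ?nnegrE; try lra.
      exact: ltW (exp_gt0 _).
    exact: one_add_le_exp.
  move: b1 a1 a0 be; set A := (4^-1 : R) ^+ n; set B := (1 + _) ^+ n; set C := exp _.
  move=> *; apply/andP; split; lra.
have Hd : (2:R) ^+ #|{: Sq}| <= exp (2 * n%:R).
  apply: (@le_trans _ _ (2 ^+ n.+1)).
    rewrite ler_eXn2l; last lra.
    by apply: leq_trans card_Sq _; rewrite ltnS.
  rewrite -exp_mln; last lra.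
  apply: exp_le.
  have l21 := ln2_lt1; have l2p : 0 < ln 2 by apply: lt_trans ln2_gt; rewrite invr_gt0.
  have h1 : n.+1%:R * ln 2 <= (n.+1%:R : R) by apply: ler_piMr; rewrite ?ler0n // ltW.
  apply: (le_trans h1).
  have n1 : 1 <= (n%:R : R) by rewrite ler1n.
  rewrite -addn1 natrD; lra.
have HM : \sum_(q : Sq) ((pv q)%:R : R)^-1 <= 9 + 2 * L2 := le_trans (M_le) (mertens k22).
have Ha : #|(@big_event n k1 k2 eps)|%:R * exp (lam * eps * n%:R) <= Sf.
  rewrite mulr_natl -sumr_const /Sf [X in _ <= X](bigID (fun f => f \in (@big_event n k1 k2 eps))) /=.
  apply: ler_wpDr.
    by apply: sumr_ge0 => f _; apply: prodr_ge0 => q _; exact: ltW (exp_gt0 _).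
  apply: ler_sum => f fE.
  rewrite -exp_sum; apply: exp_le.
  have hS : eps * n%:R * n%:R < (SY k1 k2 f)%:R.
    move: fE; rewrite inE /big_event /=; case: Rlt_dec => // h _.
    by move/RltP: h; rewrite !INRE.
  rewrite SYe in hS.
  rewrite -mulr_suml -mulr_sumr.
  move: hS; set S := \sum_(q : Sq) _ => hS.
  have -> : lam * eps * n%:R = lam * (eps * n%:R) by ring.
  rewrite -mulrA; apply: ler_wpM2l => //.
  rewrite ler_pdivlMr ?ltr0n //; exact: ltW hS.
rewrite natrX ler_pdivrMr; last by rewrite exprn_gt0 // ltr0n.
move: Ha; set E := (#|_|%:R : R) => Ha.
have H1 : E * exp (lam * eps * n%:R) <=
    n%:R ^+ n * (exp (2 * n%:R) * exp (n%:R * (9 + 2 * L2))).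
  apply: (le_trans Ha); apply: (le_trans Hb); apply: ler_wpM2l.
    by rewrite exprn_ge0 ?ler0n.
  apply: (le_trans Hc); apply: ler_pM => //.
  - by rewrite exprn_ge0.
  - exact: ltW (exp_gt0 _).
  apply: exp_le; apply: ler_wpM2l => //; exact: ler0n.
rewrite -exp_add in H1.
move: H1; set C := 2 * n%:R + n%:R * (9 + 2 * L2); set x := lam * eps * n%:R => H1.
have H2 : E <= n%:R ^+ n * exp (C - x).
  have -> : E = E * exp x * exp (- x) by rewrite -mulrA -exp_add subrr exp_0 mulr1.
  rewrite (exp_add C (-x)) mulrA; apply: ler_wpM2r; first exact: ltW (exp_gt0 _).
  exact: H1.
rewrite mulrC; apply: (le_trans H2); apply: ler_wpM2l; first by rewrite exprn_ge0 ?ler0n.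
apply: exp_le.
have -> : C - x = n%:R * (11 + 2 * L2 - (L1 * eps) / 4) by rewrite /C /x /lam; ring.
have -> : n%:R * (4 * L2 + 4 - L1 / 8 * eps) = n%:R * (4 + 4 * L2 - (L1 * eps) / 8) by ring.
apply: ler_wpM2l; first exact: ler0n.
move: hK; set a := L1 * eps => hK; lra.
Qed.
End Main.
Lemma final_aux eps : 0 < eps -> exists K : nat, forall k1 k2 : nat,
  (K <= k1)%N -> (k1 <= k2)%N -> forall n : nat, (k2 <= n)%N ->
  #|@big_event n k1 k2 eps|%:R / (n ^ n)%N%:R
    <= exp (n%:R * (4 * ln (ln k2%:R) + 4 - ln k1%:R / 8 * eps)).
Proof.
move=> e0.
have [m hm] := INR_unbounded (exp (56 / eps)).
exists (maxn 3 m) => k1 k2 hk1 hk2 n hn.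
have km : (m <= k1)%N by apply: leq_trans hk1; rewrite leq_maxr.
have k13 : (3 <= k1)%N by apply: leq_trans hk1; rewrite leq_maxl.
apply: main_bound => //.
move/RltP: hm; rewrite INRE => hm.
have h : exp (56 / eps) < k1%:R by apply: lt_le_trans hm _; rewrite ler_nat.
have := ln_lt_lt (exp_gt0 _) h; rewrite ln_exp => h'.
by rewrite -ler_pdivrMr //; exact: ltW h'.
Qed.
Lemma final2 eps : Rlt 0 eps -> exists K : nat, forall k1 k2 : nat,
  (K <= k1)%N -> (k1 <= k2)%N -> forall n : nat, (k2 <= n)%N ->
  Rle (#|@big_event n k1 k2 eps|%:R / (n ^ n)%N%:R)
    (exp (n%:R * (4 * ln (ln k2%:R) + 4 - ln k1%:R / 8 * eps))).
Proof.
move=> /RltP e0; have [K HK] := final_aux e0.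
by exists K => k1 k2 h1 h2 n h3; apply/RleP; apply: HK.
Qed.
End Aux.

Theorem lemma3p6 :
  forall eps : R, (0 < eps)%R ->
  exists K : nat, forall k1 k2 : nat, (K <= k1)%N -> (k1 <= k2)%N ->
  exists N : nat, forall n : nat, (N <= n)%N -> (k2 <= n)%N ->
    (Prob (@big_event n k1 k2 eps)
     <= exp (INR n * (4 * ln (ln (INR k2)) + 4 - ln (INR k1) / 8 * eps)))%R.
Proof.
move=> eps e0.
have [K HK] := Aux.final2 e0.
exists K => k1 k2 h1 h2; exists 0%N => n _ h3.
have H := HK k1 k2 h1 h2 n h3.
rewrite /Prob Aux.powE !Rstruct.RealsE /=.
exact: H.
Qed.
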